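(* Let $m$ be a real parameter and let $D:[0,\infty)\times\mathbb N\to\mathbb R$ be functions such that, with the operators $\mathcal K^\alpha$ acting on the variable $z$, $\mathcal K^+_lD(z,n)=(\tfrac m2+n)D(z,n+1)$ and $\mathcal K^0_lD(z,n)=(n+\tfrac m4)D(z,n)$ for all $n\in\mathbb N$, and $\mathcal K^-_lD(z,0)=0$. Then $\mathcal K^\alpha\rightarrow^DK^\alpha$ for each $\alpha\in\{+,-,0\}$.
   Context: $\mathbb N=\{0,1,2,\dots\}$. On smooth functions $f:[0,\infty)\to\mathbb R$: $\mathcal K^+f(z)=zf(z)$, $\mathcal K^-f(z)=zf''(z)+\frac m2f'(z)$, $\mathcal K^0f(z)=zf'(z)+\frac m4f(z)$. On functions $f:\mathbb N\to\mathbb R$: $K^+f(n)=(\frac m2+n)f(n+1)$, $K^-f(n)=nf(n-1)$, $K^0f(n)=(\frac m4+n)f(n)$. Left/right actions: $(\mathcal K_lD)(z,n)=(\mathcal KD(\cdot,n))(z)$, $(K_rD)(z,n)=(KD(z,\cdot))(n)$; $\mathcal K\rightarrow^DK$ means $\mathcal K_lD=K_rD$. *)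

(* Defs.v *)
From Stdlib Require Import Reals.
From Coquelicot Require Import Coquelicot.
Open Scope R_scope.

(* A smooth function on [0,oo) is modelled as the restriction of a smooth
   function on R; all identities are only required/claimed for z >= 0. *)
Definition smooth (f : R -> R) : Prop :=
  forall (k : nat) (x : R), ex_derive_n f k x.

Definition cK_plus (f : R -> R) (z : R) : R := z * f z.
Definition cK_minus (m : R) (f : R -> R) (z : R) : R :=
  z * Derive_n f 2 z + m / 2 * Derive f z.
Definition cK_zero (m : R) (f : R -> R) (z : R) : R :=
  z * Derive f z + m / 4 * f z.

Definition dK_plus (m : R) (g : nat -> R) (n : nat) : R := (m / 2 + INR n) * g (S n).
Definition dK_minus (g : nat -> R) (n : nat) : R := INR n * g (Nat.pred n).
  (* for n = 0 this is 0 * g 0 = 0 *)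
Definition dK_zero (m : R) (g : nat -> R) (n : nat) : R := (m / 4 + INR n) * g n.

Definition left_act (cK : (R -> R) -> R -> R) (D : R -> nat -> R) (z : R) (n : nat) : R :=
  cK (fun z' => D z' n) z.
Definition right_act (K : (nat -> R) -> nat -> R) (D : R -> nat -> R) (z : R) (n : nat) : R :=
  K (fun n' => D z n') n.

Definition intertwines (cK : (R -> R) -> R -> R) (D : R -> nat -> R)
    (K : (nat -> R) -> nat -> R) : Prop :=
  forall (z : R) (n : nat), 0 <= z -> left_act cK D z n = right_act K D z n.

(* Main.v *)
Require Import Defs.
From Stdlib Require Import Reals Lra.
From Coquelicot Require Import Coquelicot.
Open Scope R_scope.

Lemma zero_of_cont (h : R -> R) :
  continuity_pt h 0 -> (forall z, 0 < z -> h z = 0) -> h 0 = 0.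
Proof.
  intros Hc Hz.
  destruct (Req_dec (h 0) 0) as [E|E]; [exact E|exfalso].
  assert (Hp : 0 < Rabs (h 0) / 2) by (apply Rabs_pos_lt in E; lra).
  destruct (Hc _ Hp) as [alp [Halp H]].
  assert (Hx : 0 < alp / 2) by lra.
  specialize (H (alp/2)).
  rewrite Hz in H by lra.
  assert (dist R_met (alp/2) 0 < alp).
  { simpl. unfold R_dist. rewrite Rminus_0_r, Rabs_right; lra. }
  assert (HH: dist R_met 0 (h 0) < Rabs (h 0) / 2).
  { apply H. split; [split; [exact I| lra] | exact H0]. }
  simpl in HH. unfold R_dist in HH. rewrite Rminus_0_l, Rabs_Ropp in HH. lra.
Qed.

Theorem proposition5p1 (m : R) (D : R -> nat -> R)
  (Hsmooth : forall n : nat, smooth (fun z => D z n))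
  (Hplus : forall (z : R) (n : nat), 0 <= z ->
     left_act cK_plus D z n = (m / 2 + INR n) * D z (S n))
  (Hzero : forall (z : R) (n : nat), 0 <= z ->
     left_act (cK_zero m) D z n = (INR n + m / 4) * D z n)
  (Hminus0 : forall z : R, 0 <= z -> left_act (cK_minus m) D z 0 = 0) :
  intertwines cK_plus D (dK_plus m) /\
  intertwines (cK_minus m) D dK_minus /\
  intertwines (cK_zero m) D (dK_zero m).
Proof.
  split; [|split].
  - intros z n Hz. rewrite Hplus by exact Hz. reflexivity.
  - intros z n Hz. destruct n as [|k].
    + rewrite Hminus0 by exact Hz. unfold right_act, dK_minus. simpl. ring.
    + unfold left_act, right_act, cK_minus, dK_minus. simpl Nat.pred.
      set (d := fun y => D y (S k)). set (e := fun y => D y k).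
      assert (A : forall y, 0 <= y -> y * Derive d y = INR (S k) * d y).
      { intros y Hy. specialize (Hzero y (S k) Hy).
        unfold left_act, cK_zero in Hzero. unfold d. lra. }
      assert (B : forall y, 0 <= y -> y * e y = (m/2 + INR k) * d y).
      { intros y Hy. specialize (Hplus y k Hy). exact Hplus. }
      assert (Hd1 : forall y, ex_derive d y) by (intro y; exact (Hsmooth (S k) 1%nat y)).
      assert (Hd2 : forall y, ex_derive (Derive d) y) by (intro y; exact (Hsmooth (S k) 2%nat y)).
      assert (Hd3 : forall y, ex_derive (Derive_n d 2) y) by (intro y; exact (Hsmooth (S k) 3%nat y)).
      assert (He1 : forall y, ex_derive e y) by (intro y; exact (Hsmooth k 1%nat y)).
      set (h := fun y => y * Derive_n d 2 y + m / 2 * Derive d y - INR (S k) * e y).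
      enough (h z = 0) by (unfold h, e in H; lra).
      assert (Hpos : forall y, 0 < y -> h y = 0).
      { intros y Hy.
        assert (E1 : Derive d y + y * Derive_n d 2 y = INR (S k) * Derive d y).
        { assert (Derive (fun t => t * Derive d t) y = Derive (fun t => INR (S k) * d t) y).
          { apply Derive_ext_loc. exists (mkposreal y Hy). intros t Ht.
            unfold ball in Ht; simpl in Ht; unfold AbsRing_ball in Ht; simpl in Ht.
            unfold abs, minus, plus, opp in Ht; simpl in Ht.
            apply Rabs_def2 in Ht. apply A. lra. }
          rewrite Derive_mult, Derive_scal, Derive_id in H.
          - change (Derive_n d 2 y) with (Derive (Derive d) y). unfold id in H. lra.
          - apply ex_derive_id.
          - apply Hd2. }
        pose proof (A y (Rlt_le _ _ Hy)) as Ay. pose proof (B y (Rlt_le _ _ Hy)) as By.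
        unfold h. rewrite S_INR in *.
        assert (E2 : y * (y * Derive_n d 2 y) = INR k * (y * Derive d y)) by
          (assert (E2a : y * Derive_n d 2 y = INR k * Derive d y) by lra; rewrite E2a; ring).
        apply (Rmult_eq_reg_l y); [|lra].
        rewrite Rmult_0_r.
        replace (y * (y * Derive_n d 2 y + m / 2 * Derive d y - (INR k + 1) * e y)) with
          (y * (y * Derive_n d 2 y) + m / 2 * (y*Derive d y) - (INR k + 1) * (y* e y)) by ring.
        rewrite E2, Ay, By. ring. }
      destruct Hz as [Hz|Hz]; [now apply Hpos|subst z].
      apply zero_of_cont; [|exact Hpos].
      apply continuity_pt_filterlim.
      assert (Hex : ex_derive h 0).
      2: exact (@ex_derive_continuous R_AbsRing R_NormedModule h 0 Hex).
      unfold h. auto_derive. repeat split; auto.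
  - intros z n Hz. unfold right_act, dK_zero. rewrite Hzero by exact Hz. ring.
Qed.
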